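(* Let $R$ be a locally compact topological ring and $M$ a locally compact left topological $R$-module such that its Pontryagin dual $\widehat{M}$ (a topological right $R$-module via $\chi^r(m)=\chi(rm)$) has the no small submodules property. Then $M$ is compactly generated, i.e. there is a compact subset $K\subset M$ with $M=RK$.
   Context: All topological groups are Hausdorff; rings are unital. $\widehat{M}$ is the group of continuous homomorphisms $M\to\mathbb{S}^1$ with the compact-open topology. A topological module has the no small submodules property if there exists a neighbourhood of $0$ whose only submodule contained in it is the trivial one. $RK$ denotes the submodule generated by $K$. *)

(* Defs.v *)
From HB Require Import structures.
From mathcomp Require Import all_boot all_order all_algebra.
From mathcomp Require Import all_classical all_reals all_analysis.
From mathcomp Require Import Rstruct Rstruct_topology.
From mathcomp Require Import ring.

Set Implicit Arguments.
Unset Strict Implicit.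
Unset Printing Implicit Defensive.

Import Order.TTheory GRing.Theory Num.Theory.
Local Open Scope classical_set_scope.
Local Open Scope ring_scope.

HB.mixin Record TopZmod_PzRing_isTopRing R
    of GRing.PzRing R & TopologicalZmodule R := {
  topring_mul_cont : continuous (fun p : R * R => p.1 * p.2) }.

#[short(type="topRingType")]
HB.structure Definition TopRing :=
  {R of TopZmod_PzRing_isTopRing R & GRing.PzRing R & TopologicalZmodule R}.

(** Topological left R-modules: a topological abelian group M together with a
    scalar action [act : R -> M -> M] satisfying the left module axioms and
    jointly continuous as a map R x M -> M.  (MathComp-Analysis cannot join
    [lmodType R] with a topology for a general ring R, since it already
    declares such a join for numDomainType scalars only; hence the action is
    an explicit datum.) *)
Definition topological_lmodule (R : topRingType) (M : TopologicalZmodule.type)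
    (act : R -> M -> M) : Prop :=
  [/\ (forall r x y, act r (x + y) = act r x + act r y),
      (forall r s x, act (r + s) x = act r x + act s x),
      (forall r s x, act (r * s) x = act r (act s x)),
      (forall x, act 1 x = x)
    & continuous (fun p : R * M => act p.1 p.2)].

(** The circle group S^1 = {(a,b) in R^2 | a^2 + b^2 = 1} (i.e. unit complex
    numbers a + ib), with the subspace topology of R^2 and complex
    multiplication. *)
Definition circle_set : set (Rdefinitions.R * Rdefinitions.R) :=
  [set p | p.1 ^+ 2 + p.2 ^+ 2 = 1].

Definition S1 : topologicalType := set_type circle_set.

Definition cmul (p q : Rdefinitions.R * Rdefinitions.R) :=
  (p.1 * q.1 - p.2 * q.2, p.1 * q.2 + p.2 * q.1).

Lemma cmul_circle_pair (p q : Rdefinitions.R * Rdefinitions.R) :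
  circle_set p -> circle_set q -> circle_set (cmul p q).
Proof.
case: p => a b; case: q => c d; rewrite /circle_set /cmul /= => hz hw.
have -> : (a * c - b * d) ^+ 2 + (a * d + b * c) ^+ 2
        = (a ^+ 2 + b ^+ 2) * (c ^+ 2 + d ^+ 2) by ring.
by rewrite hz hw mulr1.
Qed.

Lemma cmul_circle (z w : S1) : circle_set (cmul (set_val z) (set_val w)).
Proof. exact: cmul_circle_pair (set_valP z) (set_valP w). Qed.

Lemma cinv_circle (z : S1) : circle_set ((set_val z).1, - (set_val z).2).
Proof. by have := set_valP z; rewrite /circle_set /= sqrrN. Qed.

Lemma one_circle : circle_set (1, 0).
Proof. by rewrite /circle_set /= expr0n /= addr0 expr1n. Qed.

Definition s1mul (z w : S1) : S1 := exist (fun x => x \in circle_set) _ (mem_set (cmul_circle z w)).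
Definition s1inv (z : S1) : S1 := exist (fun x => x \in circle_set) _ (mem_set (cinv_circle z)).
Definition s1one : S1 := exist (fun x => x \in circle_set) _ (mem_set one_circle).

Section Dual.
Variables (R : topRingType) (M : TopologicalZmodule.type) (act : R -> M -> M).

Definition is_character (chi : M -> S1) : Prop :=
  continuous chi /\ forall x y, chi (x + y) = s1mul (chi x) (chi y).

Definition dual : set {compact-open, M -> S1} := [set chi | is_character chi].

Definition trivial_char : {compact-open, M -> S1} := fun _ => s1one.

Definition dual_act (chi : {compact-open, M -> S1}) (r : R)
  : {compact-open, M -> S1} := fun m => chi (act r m).

Definition dual_submodule (S : set {compact-open, M -> S1}) : Prop :=
  [/\ S `<=` dual, S trivial_char,
      (forall chi psi, S chi -> S psi -> S (fun m => s1mul (chi m) (psi m))),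
      (forall chi, S chi -> S (fun m => s1inv (chi m)))
    & (forall chi r, S chi -> S (dual_act chi r))].

Definition dual_nss : Prop :=
  exists U : set (subspace dual),
    nbhs (trivial_char : subspace dual) U /\
    forall S : set {compact-open, M -> S1},
      dual_submodule S -> S `<=` U -> S = [set trivial_char].

Definition lsubmodule (S : set M) : Prop :=
  [/\ S 0, (forall x y, S x -> S y -> S (x + y)), (forall x, S x -> S (- x))
    & (forall (r : R) x, S x -> S (act r x))].

Definition gen_submodule (K : set M) : set M :=
  \bigcap_(S in [set S | lsubmodule S /\ K `<=` S]) S.

End Dual.

(* Main.v *)
Require Import Defs.
From HB Require Import structures.
From mathcomp Require Import all_boot all_order all_algebra.
From mathcomp Require Import all_classical all_reals all_analysis.
From mathcomp Require Import Rstruct Rstruct_topology.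
From mathcomp Require Import ring lra.
From mathcomp Require Import trigo.
Set Implicit Arguments.
Unset Strict Implicit.
Unset Printing Implicit Defensive.
Import Order.TTheory GRing.Theory Num.Theory.
Local Open Scope classical_set_scope.
Local Open Scope ring_scope.

Definition S1z : Type := S1.
HB.instance Definition _ := Choice.on S1z.

Lemma s1_eq (z w : S1) : set_val z = set_val w -> z = w.
Proof. by move=> h; apply: val_inj. Qed.

Lemma s1mulE (x y : S1) : set_val (s1mul x y) = cmul (set_val x) (set_val y).
Proof. by []. Qed.
Lemma s1invE (x : S1) : set_val (s1inv x) = ((set_val x).1, - (set_val x).2).
Proof. by []. Qed.
Lemma s1oneE : set_val s1one = (1, 0).
Proof. by []. Qed.
Lemma s1_circ (x : S1) : (set_val x).1 ^+ 2 + (set_val x).2 ^+ 2 = 1.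
Proof. by case: x => p hp; move: (set_mem hp). Qed.

Lemma s1addA : associative (s1mul : S1z -> S1z -> S1z).
Proof.
move=> x y z; apply: s1_eq; rewrite !s1mulE /cmul /=.
congr pair; ring.
Qed.
Lemma s1addC : commutative (s1mul : S1z -> S1z -> S1z).
Proof. move=> x y; apply: s1_eq; rewrite !s1mulE /cmul /=; congr pair; ring. Qed.
Lemma s1add0 : left_id (s1one : S1z) s1mul.
Proof. move=> x; apply: s1_eq; rewrite !s1mulE s1oneE /cmul /=.
by case: (set_val x) => a b /=; congr pair; ring. Qed.
Lemma s1addN : left_inverse (s1one : S1z) s1inv s1mul.
Proof. move=> x; apply: s1_eq; rewrite !s1mulE s1invE s1oneE /cmul /=.
have := s1_circ x; case: (set_val x) => a b /= h; congr pair; last by ring.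
by rewrite -h; ring. Qed.

HB.instance Definition _ := GRing.isZmodule.Build S1z s1addA s1addC s1add0 s1addN.

Lemma s1z0 : (0 : S1z) = s1one. Proof. by []. Qed.
Lemma s1zD (x y : S1z) : x + y = s1mul x y. Proof. by []. Qed.
Lemma s1zN (x : S1z) : - x = s1inv x. Proof. by []. Qed.

Notation RR := Rdefinitions.R.


Lemma ang_circle (t : RR) : circle_set (cos t, sin t).
Proof. by rewrite /circle_set /= cos2Dsin2. Qed.

Definition ang (t : RR) : S1z := exist (fun x => x \in circle_set) _ (mem_set (ang_circle t)).

Lemma angE t : set_val (ang t) = (cos t, sin t). Proof. by []. Qed.

Lemma angD (s t : RR) : ang (s + t) = ang s + ang t.
Proof. apply: s1_eq; rewrite s1zD s1mulE !angE /cmul /= cosD sinD; congr pair; ring. Qed.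

Lemma ang0 : ang 0 = 0.
Proof. by apply: s1_eq; rewrite angE s1z0 s1oneE cos0 sin0. Qed.

Lemma angMn (t : RR) n : ang (t *+ n) = ang t *+ n.
Proof. elim: n => [|n IH]; first by rewrite !mulr0n ang0. by rewrite !mulrS angD IH. Qed.

Lemma ang_surj (z : S1z) : exists t, ang t = z.
Proof.
case: z => [[a b] hz]; have h := set_mem hz; rewrite /circle_set /= in h.
have ha : -1 <= a <= 1 by apply/andP; split; nra.
have hs : Num.sqrt (1 - a ^+ 2) = `|b| by rewrite -sqrtr_sqr; congr Num.sqrt; lra.
have [hb|hb] := leP 0 b.
  exists (acos a); apply: s1_eq; rewrite angE /=.
  by rewrite (sin_acos ha) hs ger0_norm // (acosK (x:=a)) // in_itv /=.
exists (- acos a); apply: s1_eq; rewrite angE /=.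
by rewrite cosN sinN (sin_acos ha) hs ltr0_norm // opprK (acosK (x:=a)).
Qed.

Lemma s1_div (z : S1z) (k : nat) : (0 < k)%N -> exists w : S1z, w *+ k = z.
Proof.
move=> kp; have [t <-] := ang_surj z; exists (ang (t / k%:R)).
rewrite -angMn; congr ang; rewrite -[_ *+ k]mulr_natr mulfVK //.
by rewrite pnatr_eq0 -lt0n.
Qed.

Lemma s1_root (k : nat) : (2 <= k)%N -> exists w : S1z, w *+ k = 0 /\ w != 0.
Proof.
move=> k2; have kp : 0 < k%:R :> RR by rewrite ltr0n; apply: leq_trans k2.
have k2' : 2 <= k%:R :> RR by rewrite (ler_nat _ 2).
exists (ang ((pi / k%:R) *+ 2)); split.
  rewrite -angMn -mulrnA mulnC mulrnA -[_ *+ k]mulr_natr mulfVK ?gt_eqF //.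
  apply: s1_eq; rewrite angE s1z0 s1oneE cos2pi sin_mulr2n cospi sinpi.
  by rewrite mulr0 mul0rn.
apply/eqP => /(congr1 (fun z : S1z => (set_val z).1)).
rewrite angE s1z0 s1oneE /= cos_mulr2n cos2sin2.
have : 0 < sin (pi / k%:R : RR).
  apply: sin_gt0_pi; apply/andP; split; first by rewrite divr_gt0 // pi_gt0.
  rewrite ltr_pdivrMr // ltr_pMr ?pi_gt0 //; lra.
move=> h; nra.
Qed.
Section Ext.
Variable (M : zmodType).

Definition subgrp (D : set M) :=
  [/\ D 0, (forall x y, D x -> D y -> D (x + y)) & (forall x, D x -> D (- x))].

Lemma subgrp_nmul D x m : subgrp D -> D x -> D (x *+ m).
Proof.
case=> D0 DD DN Dx; elim: m => [|m IH]; first by rewrite mulr0n.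
by rewrite mulrS; apply: DD.
Qed.

Lemma subgrp_zmul D x n : subgrp D -> D x -> D (x *~ n).
Proof.
move=> sD Dx; case: n => m; first by rewrite -pmulrn; apply: subgrp_nmul.
have [_ _ DN] := sD; rewrite NegzE mulrNz -pmulrn; apply: DN; exact: subgrp_nmul.
Qed.

Lemma subgrpB D x y : subgrp D -> D x -> D y -> D (x - y).
Proof. by case=> _ DD DN Dx Dy; apply: DD => //; apply: DN. Qed.

Lemma period D y : subgrp D ->
  (forall n : int, D (y *~ n) -> n = 0) \/
  exists k : nat, [/\ (0 < k)%N, D (y *+ k) &
    forall n : int, D (y *~ n) -> exists q : int, n = q * k%:Z].
Proof.
move=> sD.
have [ex|nex] := pselect (exists m : nat, (0 < m)%N && `[< D (y *+ m) >]).
  right; case: (ex_minnP ex) => k /andP[kp /asboolP Dk] kmin.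
  exists k; split => // n Dn; exists (n %/ k)%Z.
  have kz : k%:Z != 0 by move: (kp); clear; case: k.
  have r0 := modz_ge0 n kz; have rk := ltz_mod n kz.
  have Dr : D (y *~ (n %% k)%Z).
    have -> : (n %% k)%Z = n - (n %/ k)%Z * k by rewrite {2}(divz_eq n k) addrC addKr.
    rewrite mulrzBr; apply: subgrpB => //.
    by rewrite mulrC mulrzA; apply: subgrp_zmul.
  have nE := divz_eq n k.
  move: r0 rk Dr nE; move: (n %% k)%Z => r.
  case: r => [r|r] r0 rk Dr nE //.
  clear r0; case: r rk Dr nE => [|r] rk Dr nE; first by rewrite {1}nE (_ : Posz 0 = 0) // addr0.
  have := kmin r.+1; rewrite /= asboolT // => /(_ isT) => kr.
  by move: rk; rewrite ltz_nat ltnNge kr.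
left => n Dn; apply: contrapT => nn; apply: nex.
case: n Dn nn => m Dn nn.
  exists m; apply/andP; split; first by rewrite lt0n; apply/eqP => m0; apply: nn; rewrite m0.
  by apply/asboolP.
exists m.+1; apply/andP; split => //; apply/asboolP.
by rewrite -[y *+ _]opprK; case: sD => _ _; apply.
Qed.

Variable N : set M.
Hypothesis sN : subgrp N.

Definition Phom0 (G : set (M * S1z)) :=
  [/\ (forall x a b, G (x, a) -> G (x, b) -> a = b),
      (forall x a y b, G (x, a) -> G (y, b) -> G (x + y, a + b)),
      (forall x a, G (x, a) -> G (- x, - a))
    & (forall n, N n -> G (n, 0))].

Definition dom (G : set (M * S1z)) := [set x | exists a, G (x, a)].

Lemma dom_subgrp G : Phom0 G -> subgrp (dom G).
Proof.
case=> _ GD GN GNN; split.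
- by exists 0; apply: GNN; case: sN.
- by move=> x y [a Ga] [b Gb]; exists (a + b); apply: GD.
- by move=> x [a Ga]; exists (- a); apply: GN.
Qed.

Lemma G_nmul G x a m : Phom0 G -> G (x, a) -> G (x *+ m, a *+ m).
Proof.
case=> _ GD GN GNN Ga; elim: m => [|m IH].
  by rewrite !mulr0n; apply: GNN; case: sN.
by rewrite !mulrS; apply: GD.
Qed.

Lemma G_zmul G x a n : Phom0 G -> G (x, a) -> G (x *~ n, a *~ n).
Proof.
move=> hG Ga; case: n => m; first by rewrite -!pmulrn; apply: G_nmul.
rewrite NegzE !mulrNz -!pmulrn; case: (hG) => _ _ GN _; apply: GN.
exact: G_nmul.
Qed.

Definition ext_set (G : set (M * S1z)) y z :=
  [set p | exists x a (n : int), G (x, a) /\ p = (x + y *~ n, a + z *~ n)].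

Lemma ext_ok G y z : Phom0 G -> (forall (n : int) a, G (y *~ n, a) -> a = z *~ n) ->
  [/\ Phom0 (ext_set G y z), G `<=` ext_set G y z & ext_set G y z (y, z)].
Proof.
move=> hG hyz; have hG' := hG; case: hG' => Gf GD GN GNN.
have G00 : G (0, 0) by apply: GNN; case: sN.
split.
- split.
  + move=> x a b [x1 [a1 [n1 [G1 [e1 e2]]]]] [x2 [a2 [n2 [G2 [e3 e4]]]]].
    subst a b.
    have ex : x1 - x2 = y *~ (n2 - n1).
      rewrite mulrzBr; have -> : x1 = x2 + y *~ n2 - y *~ n1 by rewrite -e3 e1 addrK.
      by rewrite [LHS]addrC !addrA addNr add0r.
    have G12 : G (x1 - x2, a1 - a2) by apply: GD => //; apply: GN.
    rewrite ex in G12; have := hyz _ _ G12; rewrite mulrzBr => h.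
    have -> : a1 = a2 + (a1 - a2) by rewrite addrC subrK.
    by rewrite h -addrA subrK.
  + move=> x a x' a' [x1 [a1 [n1 [G1 [-> ->]]]]] [x2 [a2 [n2 [G2 [-> ->]]]]].
    exists (x1 + x2), (a1 + a2), (n1 + n2); split; first by apply: GD.
    by rewrite !mulrzDr; congr pair; rewrite addrACA.
  + move=> x a [x1 [a1 [n1 [G1 [-> ->]]]]].
    exists (- x1), (- a1), (- n1); split; first by apply: GN.
    by rewrite !mulrNz !opprD.
  + move=> n Nn; exists n, 0, 0; split; first by apply: GNN.
    by rewrite !mulr0z !addr0.
- by case=> x a Ga; exists x, a, 0; split => //; rewrite !mulr0z !addr0.
- by exists 0, 0, 1; split => //; rewrite !mulr1z !add0r.
Qed.

Lemma compat G y : Phom0 G -> exists z, forall (n : int) a, G (y *~ n, a) -> a = z *~ n.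
Proof.
move=> hG; have hG' := hG; case: hG' => Gf GD GN GNN.
have G00 : G (0, 0) by apply: GNN; case: sN.
case: (period y (dom_subgrp hG)) => [h0|[k [kp [b Gb] hk]]].
  exists 0 => n a Gn; have n0 := h0 n (ex_intro _ a Gn).
  by move: Gn; rewrite n0 mulr0z => /(Gf _ _ _)/(_ G00).
have [z zk] := s1_div b kp.
exists z => n a Gn; have [q nq] := hk n (ex_intro _ a Gn).
have := G_zmul q hG Gb; rewrite pmulrn -mulrzA mulrC -nq => G2.
rewrite (Gf _ _ _ Gn G2) -zk pmulrn -mulrzA mulrC -nq //.
Qed.

End Ext.

Lemma char_exists (M : zmodType) (N : set M) (x0 : M) : subgrp N -> ~ N x0 ->
  exists chi : M -> S1z, [/\ forall x y, chi (x + y) = chi x + chi y,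
    forall n, N n -> chi n = 0 & chi x0 != 0].
Proof.
move=> sN Nx0.
pose Phom G := Phom0 N G /\ exists a, G (x0, a) /\ a != 0.
pose A0 := [set p : M * S1z | N p.1 /\ p.2 = 0].
have hA0 : Phom0 N A0.
  split.
  - by move=> x a b [_ /= ->] [_ /= ->].
  - move=> x a y b [/= Nx ->] [/= Ny ->]; split; first by case: sN => _ + _; apply.
    by rewrite addr0.
  - move=> x a [/= Nx ->]; split; first by case: sN => _ _; apply.
    by rewrite oppr0.
  - by move=> n Nn.
have [z [zc z0]] : exists z : S1z, (forall (n : int) a, A0 (x0 *~ n, a) -> a = z *~ n) /\ z != 0.
  case: (period x0 sN) => [h0|[k [kp Nk hk]]].
    have [w [_ w0]] := s1_root (isT : (2 <= 2)%N).
    exists w; split => // n a [/= Nn ->]; by rewrite (h0 n Nn) mulr0z.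
  have k2 : (2 <= k)%N.
    case: k kp Nk hk => [|[|k]] //= _; by rewrite mulr1n.
  have [w [wk w0]] := s1_root k2.
  exists w; split => // n a [/= Nn ->]; have [q ->] := hk n Nn.
  by rewrite mulrC mulrzA -pmulrn wk mul0rz.
have [G0ok G0sub G0z] := ext_ok sN hA0 zc.
pose P := fun G : set (M * S1z) => G = set0 \/ Phom G.
have hP : P (ext_set A0 x0 z) by right; split => //; exists z.
have [A [PA Amax]] : exists A, P A /\ forall B, A `<` B -> ~ P B.
  apply: Zorn_bigcup => F FP Ftot.
  have [ne|e] := pselect (exists p, (\bigcup_(X in F) X) p); last first.
    left; apply/seteqP; split => // p Fp; apply: e; by exists p.
  have two : forall p q, (\bigcup_(X in F) X) p -> (\bigcup_(X in F) X) q ->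
      exists X, [/\ F X, X p, X q & Phom X].
    move=> p q [X1 F1 X1p] [X2 F2 X2q].
    have hX : forall X, F X -> X p -> Phom X.
      move=> X FX Xp; case: (FP X FX) => // X0; by move: Xp; rewrite X0.
    case: (Ftot _ _ F1 F2) => s.
      by exists X2; split => //; [apply: s | apply: hX => //; apply: s].
    by exists X1; split => //; [apply: s | apply: hX].
  right; case: ne => p0 Fp0; have [X [FX Xp _ [[_ _ _ XN] [a [Xa a0]]]]] := two _ _ Fp0 Fp0.
  split; last by exists a; split => //; exists X.
  split.
  - move=> x a1 b1 H1 H2; have [Y [_ Y1 Y2 [[Yf _ _ _] _]]] := two _ _ H1 H2.
    exact: Yf Y1 Y2.
  - move=> x a1 y b1 H1 H2; have [Y [FY Y1 Y2 [[_ YD _ _] _]]] := two _ _ H1 H2.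
    by exists Y => //; apply: YD.
  - move=> x a1 H1; have [Y [FY Y1 _ [[_ _ YN _] _]]] := two _ _ H1 H1.
    by exists Y => //; apply: YN.
  - by move=> n Nn; exists X => //; apply: XN.
have {PA} [hA0' hAx] : Phom A.
  case: PA => // A0e; exfalso; apply: (Amax _ _ hP); rewrite A0e; split => //.
  by move=> /(_ _ G0z).
have tot : forall y, exists a, A (y, a).
  move=> y; apply: contrapT => ny.
  have [z' hz'] := compat sN y hA0'.
  have [B1 B2 B3] := ext_ok sN hA0' hz'.
  apply: (Amax (ext_set A y z')).
    split => // Bs; apply: ny; exists z'; exact: Bs.
  right; split => //; case: hAx => a [Aa a0]; exists a; split => //; exact: B2.
have [chi hchi] := choice tot.
case: (hA0') => Af AD AN ANN.
exists chi; split.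
- by move=> x y; apply: (Af (x + y)); [apply: hchi | apply: AD; apply: hchi].
- by move=> n Nn; apply: (Af n); [apply: hchi | apply: ANN].
- case: hAx => a [Aa a0]; by rewrite (Af _ _ _ (hchi x0) Aa).
Qed.

Lemma shift_nbhs (M : topologicalZmodType) (x : M) (W : set M) :
  nbhs 0 W -> nbhs x [set y | W (y - x)].
Proof.
move=> W0.
have h : (fun y => y - x) @ x --> (x - x).
  apply: (@continuous_comp _ _ _ (fun y => (y, x)) (fun z : M * M => z.1 - z.2)).
    by apply: cvg_pair; [exact: cvg_id | exact: cvg_cst].
  exact: sub_continuous.
by rewrite subrr in h; exact: h W W0.
Qed.

Lemma loc_const (M : topologicalZmodType) (N : set M) (psi : M -> S1) :
  nbhs 0 N -> (forall x y, psi (x + y) = s1mul (psi x) (psi y)) ->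
  (forall n, N n -> psi n = s1one) -> continuous psi.
Proof.
move=> N0 hadd hN x W /= hW.
have := shift_nbhs x N0; apply: filterS => y /= Ny.
have -> : psi y = psi x.
  by rewrite -(subrK x y) hadd (hN _ Ny) -s1z0 -s1zD add0r.
exact: nbhs_singleton.
Qed.

Theorem mainTheorem16 (R : topRingType) (M : TopologicalZmodule.type)
  (act : R -> M -> M) :
  hausdorff_space R -> locally_compact [set: R] ->
  topological_lmodule act -> hausdorff_space M -> locally_compact [set: M] ->
  dual_nss act ->
  exists K : set M, compact K /\ gen_submodule act K = [set: M].
Proof.
move=> _ _ [actD1 actD2 actM act1 actc] _ lcM [U [hU nss]].
have triv_dual : dual (M:=M) (@trivial_char M).
  split; first exact: cst_continuous.
  by move=> x y; rewrite /trivial_char -s1z0 -s1zD addr0.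
have {}hU : within (dual (M:=M)) (nbhs ((@trivial_char M) : {compact-open, M -> S1})) U.
  by rewrite (nbhs_subspace_in triv_dual); exact: hU.
pose F := filter_from [set C : set M | compact C]
  (fun C => [set g : {compact-open, M -> S1} | forall x, C x -> g x = s1one]).
have FF : Filter F.
  apply: filter_from_filter; first by exists set0; exact: compact0.
  move=> C1 C2 c1 c2; exists (C1 `|` C2); first exact: compactU.
  by move=> g hg; split => x hx; apply: hg; [left|right].
have Fcvg : F --> ((@trivial_char M) : {compact-open, M -> S1}).
  apply/compact_open_cvgP => K O cK oO tKO.
  exists K => // g hg _ [x Kx <-]; rewrite hg //; apply: tKO; by exists x.
have [C cC hC] := Fcvg _ hU.
have [V hV [cV _]] := lcM 0 I.
have V0 : nbhs (0 : M) V.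
  move: hV; rewrite /within /prop_near1 /= => hV.
  by apply: filterS hV => y; apply.
pose K := C `|` V.
exists K; split; first exact: compactU.
pose N := gen_submodule act K.
have KN : K `<=` N by move=> x Kx S [_ KS]; apply: KS.
have subN : lsubmodule act N.
  split.
  - by move=> S [[]].
  - by move=> x y Nx Ny S hS; case: (hS) => [[_ + _ _] _]; apply; [apply: Nx|apply: Ny].
  - by move=> x Nx S hS; case: (hS) => [[_ _ + _] _]; apply; apply: Nx.
  - by move=> r x Nx S hS; case: (hS) => [[_ _ _ +] _]; apply; apply: Nx.
have N0 : nbhs (0 : M) N by apply: filterS V0 => y Vy; apply: KN; right.
have sN : subgrp N by case: subN => ? ? ? _; split.
apply/seteqP; split => // x0 _; apply: contrapT => Nx0.
have [chi [chiD chiN chix0]] := char_exists sN Nx0.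
pose S := [set psi : {compact-open, M -> S1} |
  (forall x y, psi (x + y) = s1mul (psi x) (psi y)) /\ forall n, N n -> psi n = s1one].
have Sdual : S `<=` dual (M:=M).
  move=> psi [hadd hN]; split => //; exact: loc_const N0 hadd hN.
have Ssub : dual_submodule act S.
  split => //.
  - by split => // x y; rewrite /trivial_char -s1z0 -s1zD addr0.
  - move=> f g [fD fN] [gD gN]; split.
      by move=> x y; rewrite fD gD -!s1zD addrACA.
    by move=> n Nn; rewrite fN // gN // -s1z0 -s1zD addr0.
  - move=> f [fD fN]; split.
      by move=> x y; rewrite fD -!s1zN -s1zD opprD.
    by move=> n Nn; rewrite fN // -s1z0 -s1zN oppr0.
  - move=> f r [fD fN]; split.
      by move=> x y; rewrite /dual_act actD1 fD.
    by move=> n Nn; rewrite /dual_act fN //; case: subN => _ _ _; apply.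
have SU : S `<=` U.
  move=> psi Spsi; apply: (hC psi) => [x Cx|]; last exact: Sdual.
  by case: Spsi => _; apply; apply: KN; left.
have := nss S Ssub SU.
have Schi : S (chi : {compact-open, M -> S1}) by split.
move=> Seq; rewrite Seq in Schi.
by move: chix0; rewrite Schi /trivial_char -s1z0 eqxx.
Qed.
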